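(* Let $G$ be an influence graph that is a directed line on nodes $\{1,\dots,n\}$ with edges $(i+1,i)$ for $i=1,\dots,n-1$ (so node $i$ is the $(i-1)$-th predecessor of node $1$). For each $i$ let $p_i=\prod_{j=1}^{i-1}p_{(j+1,j)}$ be the probability that node $i$ reaches node $1$ in the live-edge graph (so $p_1=1$), and set $p_{n+1}=0$. Then for every $(x_1,\dots,x_n)\in[0,1]^n$ and every $i\in\{1,\dots,n\}$, $$f^{+}_1(x_1,\dots,x_n)\le\sum_{j=1}^{i}x_jp_j+p_{i+1}.$$
   Context: IC model: each edge $e$ has probability $p_e\in[0,1]$; a realization (live-edge graph) $\phi$ contains each edge independently with probability $p_e$, with distribution $\mathcal{P}$. $\Gamma(S,\phi)$ is the set of nodes reachable from $S$ in $\phi$. Full-adoption feedback: selecting $u$ as a seed reveals the status of all out-going edges of every node reachable from $u$ in $\phi$. An adaptive policy $\pi$ maps the observations so far (seeds selected and their feedback) to the next node to select; $V(\pi,\phi)$ is its seed set under $\phi$. For a node $u$, $\sigma_u(\pi)=\Pr_{\Phi\sim\mathcal{P}}[u\in\Gamma(V(\pi,\Phi),\Phi)]$, and $f^{+}_u(x_1,\dots,x_n)=\sup_\pi\{\sigma_u(\pi):\Pr_{\Phi\sim\mathcal{P}}[i\in V(\pi,\Phi)]=x_i\ \forall i\in[n]\}$. (In the paper this line arises as the set of predecessors of a node in an out-arborescence; other nodes are irrelevant.) *)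

(* Defs.v *)
From HB Require Import structures.
From mathcomp Require Import all_boot all_order all_algebra.
From mathcomp Require Import classical_sets reals.
Set Implicit Arguments. Unset Strict Implicit. Unset Printing Implicit Defensive.
Import Order.TTheory GRing.Theory Num.Theory.
Local Open Scope ring_scope.

(* Directed line on nodes 0..n-1 (node k here = node k+1 of the paper).
   Edge j : 'I_n.-1 is the edge from node j+1 to node j.
   A realization (live-edge graph) is phi : {ffun 'I_n.-1 -> bool}. *)

Definition realization (n : nat) := {ffun 'I_n.-1 -> bool}.

Definition reach (n : nat) (phi : realization n) (a b : nat) : bool :=
  (b <= a)%N && [forall j : 'I_n.-1, ((b <= j)%N && (j < a)%N) ==> phi j].

Definition inGamma (n : nat) (S : {set 'I_n}) (phi : realization n) (b : nat) : bool :=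
  [exists u in S, reach phi u b].

(* Full-adoption feedback of a seed set S: status of every out-going edge
   of every node reachable from some seed.  The out-going edge of node k
   (k >= 1) is edge k-1, i.e. edge j is the out-going edge of node j+1. *)
Definition revealed (n : nat) (S : {set 'I_n}) (phi : realization n) (j : 'I_n.-1) : bool :=
  inGamma S phi j.+1.

(* Observation so far: the seeds selected together with their feedback
   (a partial realization). *)
Definition observation (n : nat) : Type := ({set 'I_n} * {ffun 'I_n.-1 -> option bool})%type.

Definition observe (n : nat) (S : {set 'I_n}) (phi : realization n) : observation n :=
  (S, [ffun j => if revealed S phi j then Some (phi j) else None]).

(* A deterministic adaptive policy: next node to select, or None = stop. *)
Definition det_policy (n : nat) : Type := observation n -> option 'I_n.

Definition step (n : nat) (pol : det_policy n) (phi : realization n) (S : {set 'I_n}) : {set 'I_n} :=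
  match pol (observe S phi) with
  | Some v => v |: S
  | None => S
  end.

(* Seed set V(pol, phi).  The state only changes when a new node is added,
   so after n steps a fixed point is reached. *)
Definition seeds (n : nat) (pol : det_policy n) (phi : realization n) : {set 'I_n} :=
  iter n (step pol phi) (finset.set0).

Definition prob_real (R : realType) (n : nat) (q : 'I_n.-1 -> R) (phi : realization n) : R :=
  \prod_(j : 'I_n.-1) (if phi j then q j else 1 - q j).

Definition Pr (R : realType) (n : nat) (q : 'I_n.-1 -> R) (E : pred (realization n)) : R :=
  \sum_(phi : realization n | E phi) prob_real q phi.

(* A (randomized) adaptive policy: a finite mixture of deterministic ones. *)
Record policy (R : realType) (n : nat) := Policy {
  pol_m : nat;
  pol_w : 'I_pol_m -> R;
  pol_d : 'I_pol_m -> det_policy n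
}.
Arguments pol_w {R n} p _.
Arguments pol_d {R n} p _.

Definition valid_policy (R : realType) (n : nat) (pi : policy R n) : Prop :=
  (forall k, 0 <= pol_w pi k) /\ \sum_k pol_w pi k = 1.

Definition sel_prob (R : realType) (n : nat) (q : 'I_n.-1 -> R) (pi : policy R n) (i : 'I_n) : R :=
  \sum_k pol_w pi k * Pr q (fun phi => i \in seeds (pol_d pi k) phi).

Definition sigma (R : realType) (n : nat) (q : 'I_n.-1 -> R) (pi : policy R n) (u : nat) : R :=
  \sum_k pol_w pi k * Pr q (fun phi => inGamma (seeds (pol_d pi k) phi) phi u).

Definition fplus (R : realType) (n : nat) (q : 'I_n.-1 -> R) (u : nat) (x : 'I_n -> R) : R :=
  sup (fun s : R => exists pi : policy R n,
          [/\ valid_policy pi, (forall i, sel_prob q pi i = x i) & s = sigma q pi u]).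


Definition preach (R : realType) (n : nat) (q : 'I_n.-1 -> R) (k : nat) : R :=
  if (k < n)%N then \prod_(j : 'I_n.-1 | (j < k)%N) q j else 0.

(* Main.v *)
Require Import Defs.
From HB Require Import structures.
From mathcomp Require Import all_boot all_order all_algebra.
From mathcomp Require Import boolp classical_sets reals.
Import Order.TTheory GRing.Theory Num.Theory.
Local Open Scope ring_scope.
Set Implicit Arguments. Unset Strict Implicit.

Lemma reach_refl n (phi : realization n) a : reach phi a a.
Proof.
rewrite /reach leqnn /=; apply/forallP => j; apply/implyP => /andP [h1 h2].
by move: (leq_ltn_trans h1 h2); rewrite ltnn.
Qed.

Lemma reach_le n (phi : realization n) a b : reach phi a b -> (b <= a)%N.
Proof. by case/andP. Qed.

Lemma reach_trans n (phi : realization n) a b c :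
  reach phi a b -> reach phi b c -> reach phi a c.
Proof.
move=> /andP [hba /forallP H1] /andP [hcb /forallP H2].
rewrite /reach (leq_trans hcb hba) /=; apply/forallP => j; apply/implyP => /andP [h1 h2].
case: (ltnP j b) => hj.
  by move: (H2 j); rewrite h1 hj.
by move: (H1 j); rewrite hj h2.
Qed.

Lemma reach_split n (phi : realization n) a b c :
  (c <= b)%N -> (b <= a)%N -> reach phi a c -> reach phi a b /\ reach phi b c.
Proof.
move=> hcb hba /andP [_ /forallP H].
split.
  rewrite /reach hba /=; apply/forallP => j; apply/implyP => /andP [h1 h2].
  by move: (H j); rewrite (leq_trans hcb h1) h2.
rewrite /reach hcb /=; apply/forallP => j; apply/implyP => /andP [h1 h2].
by move: (H j); rewrite h1 (leq_trans h2 hba).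
Qed.

Definition agree n (j : nat) (phi phi' : realization n) :=
  forall k : 'I_n.-1, (j <= k)%N -> phi k = phi' k.

Lemma agree_sym n j (phi phi' : realization n) : agree j phi phi' -> agree j phi' phi.
Proof. by move=> H k hk; rewrite H. Qed.

Lemma reach_agree n j (phi phi' : realization n) a b :
  agree j phi phi' -> (j <= b)%N -> reach phi a b = reach phi' a b.
Proof.
move=> H hb; rewrite /reach; congr (_ && _); apply: eq_forallb => k.
case: (boolP ((b <= k)%N && (k < a)%N)) => //= /andP [h1 _].
by rewrite H // (leq_trans hb h1).
Qed.

Lemma inGamma_agree n j (phi phi' : realization n) S b :
  agree j phi phi' -> (j <= b)%N -> inGamma S phi b = inGamma S phi' b.
Proof.
move=> H hb; rewrite /inGamma; apply: eq_existsb => u.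
by rewrite (reach_agree u H hb).
Qed.

Definition Cj n (j : nat) (S : {set 'I_n}) (phi : realization n) : bool :=
  [forall u in S, (j < u)%N && ~~ reach phi u j].

Lemma Cj_agree n j (phi phi' : realization n) S :
  agree j phi phi' -> Cj j S phi = Cj j S phi'.
Proof.
move=> H; rewrite /Cj; apply: eq_forallb => u.
by rewrite (reach_agree u H (leqnn j)).
Qed.

Lemma Cj_notin n j (phi : realization n) S b :
  Cj j S phi -> (b <= j)%N -> ~~ inGamma S phi b.
Proof.
move=> /forallP H hb; apply/negP => /existsP [u /andP [hu hr]].
move: (H u); rewrite hu /= => /andP [hju hn].
have [h1 _] := reach_split hb (ltnW hju) hr.
by rewrite h1 in hn.
Qed.

Lemma observe_agree n j (phi phi' : realization n) S :
  agree j phi phi' -> Cj j S phi -> observe S phi = observe S phi'.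
Proof.
move=> H hC.
have hC' : Cj j S phi' by rewrite -(Cj_agree S H).
rewrite /observe; congr pair; apply/ffunP => k; rewrite !ffunE /revealed.
case: (leqP k.+1 j) => hk.
  by rewrite (negbTE (Cj_notin hC hk)) (negbTE (Cj_notin hC' hk)).
rewrite (inGamma_agree S H (ltnW hk)) H //.
Qed.

Definition St n (d : det_policy n) (phi : realization n) t := iter t (step d phi) finset.set0.

Lemma step_sub n (d : det_policy n) phi (S : {set 'I_n}) : S \subset step d phi S.
Proof. rewrite /step; case: (d _) => // v; exact: finset.subsetUr. Qed.

Lemma Cj_sub n j (phi : realization n) (S S' : {set 'I_n}) : S \subset S' -> Cj j S' phi -> Cj j S phi.
Proof.
move=> hs /forallP H; apply/forallP => u; apply/implyP => hu.
by move: (H u); rewrite (fintype.subsetP hs _ hu).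
Qed.

Lemma St_agree n (d : det_policy n) j (phi phi' : realization n) t :
  agree j phi phi' -> Cj j (St d phi t) phi -> St d phi t = St d phi' t.
Proof.
move=> H; elim: t => [|t IH] //= hC.
have hC0 : Cj j (St d phi t) phi by apply: Cj_sub hC; exact: step_sub.
rewrite -/(St d phi t) -/(St d phi' t) -IH // /step (observe_agree H hC0) //.
Qed.

Lemma prob_ge0 (R : realType) n (q : 'I_n.-1 -> R) (hq : forall j, 0 <= q j <= 1)
  (phi : realization n) : 0 <= prob_real q phi.
Proof.
rewrite /prob_real; apply: prodr_ge0 => j _; case: (phi j); have /andP[h0 h1] := hq j => //.
by rewrite subr_ge0.
Qed.

Lemma Pr_ge0 (R : realType) n (q : 'I_n.-1 -> R) (hq : forall j, 0 <= q j <= 1)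
  (A : pred (realization n)) : 0 <= Pr q A.
Proof. by apply: sumr_ge0 => phi _; exact: prob_ge0. Qed.

Lemma Pr_le (R : realType) n (q : 'I_n.-1 -> R) (hq : forall j, 0 <= q j <= 1)
  (A B : pred (realization n)) : (forall phi, A phi -> B phi) -> Pr q A <= Pr q B.
Proof.
move=> H; rewrite /Pr [X in X <= _]big_mkcond [X in _ <= X]big_mkcond /=.
apply: ler_sum => phi _; case: (boolP (A phi)) => hA.
  by rewrite (H _ hA).
by case: (B phi) => //; exact: prob_ge0.
Qed.

Lemma Pr_split (R : realType) n (q : 'I_n.-1 -> R) (A B : pred (realization n)) :
  Pr q A = Pr q (fun phi => A phi && B phi) + Pr q (fun phi => A phi && ~~ B phi).
Proof. by rewrite /Pr (bigID B). Qed.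

Lemma Pr_union (R : realType) n (q : 'I_n.-1 -> R) (hq : forall j, 0 <= q j <= 1)
  (I : finType) (P : pred I) (A : pred (realization n)) (B : I -> pred (realization n)) :
  (forall phi, A phi -> exists2 j, P j & B j phi) ->
  Pr q A <= \sum_(j | P j) Pr q (B j).
Proof.
move=> H.
have -> : \sum_(j | P j) Pr q (B j) =
   \sum_(phi : realization n) \sum_(j | P j && B j phi) prob_real q phi.
  rewrite (exchange_big_dep P) /=; last by move=> phi j _ /andP[].
  apply: eq_bigr => j hj; apply: eq_bigl => phi; by rewrite hj.
rewrite /Pr [X in X <= _]big_mkcond /=; apply: ler_sum => phi _.
case: (boolP (A phi)) => hA; last by apply: sumr_ge0 => j _; exact: prob_ge0.
have [j hj hB] := H _ hA.
rewrite (bigD1 j) /=; last by rewrite hj hB.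
rewrite lerDl; apply: sumr_ge0 => k _; exact: prob_ge0.
Qed.

Definition flip n (k : 'I_n.-1) (phi : realization n) : realization n :=
  [ffun k' => if k' == k then ~~ phi k else phi k'].

Lemma flipK n (k : 'I_n.-1) : involutive (flip k).
Proof.
move=> phi; apply/ffunP => j; rewrite !ffunE; case: eqP => [->|]; by rewrite ?eqxx ?negbK.
Qed.

Lemma Pr_flip (R : realType) n (q : 'I_n.-1 -> R) (k : 'I_n.-1) (E : pred (realization n)) :
  (forall phi, E (flip k phi) = E phi) ->
  Pr q (fun phi => E phi && phi k) = q k * Pr q E.
Proof.
move=> hE.
pose rest := fun phi : realization n => \prod_(j | j != k) (if phi j then q j else 1 - q j).
have hp : forall phi, prob_real q phi = (if phi k then q k else 1 - q k) * rest phi.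
  by move=> phi; rewrite /prob_real (bigD1 k).
have hr : forall phi, rest (flip k phi) = rest phi.
  by move=> phi; apply: eq_bigr => j hj; rewrite ffunE (negbTE hj).
have h1 : Pr q (fun phi => E phi && phi k) = q k * \sum_(phi | E phi && phi k) rest phi.
  rewrite /Pr mulr_sumr; apply: eq_bigr => phi /andP[_ hk]; by rewrite hp hk.
have h2 : \sum_(phi | E phi && ~~ phi k) prob_real q phi
          = (1 - q k) * \sum_(phi | E phi && phi k) rest phi.
  rewrite (reindex_inj (can_inj (flipK k))) /= mulr_sumr.
  apply: eq_big => phi; first by rewrite hE ffunE eqxx negbK.
  move=> /andP[_ hk]; rewrite hp hr ffunE eqxx.
  by move: hk; rewrite ffunE eqxx => /negbNE ->.
rewrite (Pr_split q E (fun phi => phi k)) h1; rewrite /Pr in h2; rewrite /Pr h2.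
by rewrite -mulrDl addrC subrK mul1r.
Qed.

Lemma reach0_eq n (phi phi' : realization n) m :
  (forall k : 'I_n.-1, (k < m)%N -> phi k = phi' k) -> reach phi m 0 = reach phi' m 0.
Proof.
move=> H; rewrite /reach; congr (_ && _); apply: eq_forallb => k.
rewrite !leq0n /=; case hk: (k < m)%N => //=; by rewrite H.
Qed.

Lemma reach_succ n (phi : realization n) m (hm : (m < n.-1)%N) :
  reach phi m.+1 0 = reach phi m 0 && phi (Ordinal hm).
Proof.
rewrite /reach /=; apply/idP/idP.
  move=> /forallP H; apply/andP; split.
    apply/forallP => k; apply/implyP => hk; move: (H k); rewrite /= in hk *.
    by rewrite ltnS (ltnW hk).
  by move: (H (Ordinal hm)) => /=; rewrite ltnS leqnn.
move=> /andP [/forallP H hk]; apply/forallP => k; apply/implyP => /=.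
rewrite ltnS leq_eqVlt => /orP [/eqP e|hl].
  by have -> : k = Ordinal hm by apply: val_inj.
by move: (H k); rewrite /= hl.
Qed.

Lemma Pr_reach (R : realType) n (q : 'I_n.-1 -> R) M (E : pred (realization n)) :
  (forall phi phi', agree M phi phi' -> E phi = E phi') ->
  forall m, (m <= M)%N ->
  Pr q (fun phi => E phi && reach phi m 0) = (\prod_(k : 'I_n.-1 | (k < m)%N) q k) * Pr q E.
Proof.
move=> hE; elim=> [|m IH] hm.
  rewrite big_pred0 // mul1r /Pr; apply: eq_bigl => phi; by rewrite reach_refl andbT.
have hmM : (m <= M)%N by exact: ltnW.
case: (ltnP m n.-1) => hmn.
  pose k := Ordinal hmn.
  have -> : Pr q (fun phi => E phi && reach phi m.+1 0)
          = Pr q (fun phi => (E phi && reach phi m 0) && phi k).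
    by apply: eq_bigl => phi; rewrite reach_succ andbA.
  rewrite Pr_flip; last first.
    move=> phi; congr (_ && _).
      apply: hE => j hj; rewrite ffunE; case: eqP => // e.
      by move: hj hm; rewrite e /= => a b; move: (leq_ltn_trans a b); rewrite ltnn.
    apply: reach0_eq => j hj; rewrite ffunE; case: eqP => // e.
    by move: hj; rewrite e /= ltnn.
  rewrite IH // mulrA; congr (_ * _).
  rewrite [RHS](bigD1 k) //=; congr (_ * _); apply: eq_bigl => j.
  rewrite ltnS; case: (boolP (j == k)) => [/eqP ->|hj] /=; first by rewrite ltnn andbF.
  by rewrite andbT ltn_neqAle (hj : (nat_of_ord j != m)).
have -> : Pr q (fun phi => E phi && reach phi m.+1 0) = Pr q (fun phi => E phi && reach phi m 0).
  apply: eq_bigl => phi; congr (_ && _); rewrite /reach; congr (_ && _); apply: eq_forallb => j.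
  have hj : (j < m)%N by apply: leq_trans (ltn_ord j) hmn.
  by rewrite ltnS hj (ltnW hj).
rewrite IH //; congr (_ * _); apply: eq_bigl => j.
have hj : (j < m)%N by apply: leq_trans (ltn_ord j) hmn.
by rewrite ltnS hj (ltnW hj).
Qed.

Lemma Pr_true (R : realType) n (q : 'I_n.-1 -> R) : Pr q predT = 1.
Proof.
rewrite /Pr /prob_real.
have := bigA_distr_bigA (fun (j : 'I_n.-1) (b : bool) => if b then q j else 1 - q j).
move=> <-; apply: big1 => j _.
by rewrite big_bool /= addrC subrK.
Qed.

Lemma preach_ge0 (R : realType) n (q : 'I_n.-1 -> R) (hq : forall j, 0 <= q j <= 1) k :
  0 <= preach q k.
Proof.
rewrite /preach; case: ifP => _ //; apply: prodr_ge0 => j _; by case/andP: (hq j).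
Qed.

Definition Psi n (i : nat) (d : det_policy n) t (phi : realization n) : bool :=
  inGamma (St d phi t) phi 0 || ((i.+1 < n)%N && reach phi i.+1 0).

Definition Gev n (d : det_policy n) t (j : 'I_n) (phi : realization n) : bool :=
  [&& j \in St d phi t.+1, j \notin St d phi t & Cj j (St d phi t) phi].

Lemma Gev_agree n (d : det_policy n) t (j : 'I_n) (phi phi' : realization n) :
  agree j phi phi' -> Gev d t j phi = Gev d t j phi'.
Proof.
suff H : forall phi phi', agree j phi phi' -> Gev d t j phi -> Gev d t j phi'.
  move=> h; apply/idP/idP; [exact: H | apply: H; exact: agree_sym].
move=> {}phi {}phi' h /and3P [h1 h2 h3].
have e0 := St_agree h h3.
have e1 : St d phi t.+1 = St d phi' t.+1.
  by rewrite /= -/(St d phi t) -/(St d phi' t) -e0 /step (observe_agree h h3).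
rewrite /Gev -e0 -e1 h1 h2 /=; by rewrite -(Cj_agree _ h).
Qed.

Lemma Gev_cover n (d : det_policy n) (i : 'I_n) t (phi : realization n) :
  Psi i d t.+1 phi && ~~ Psi i d t phi ->
  exists2 j : 'I_n, (j <= i)%N & Gev d t j phi && reach phi j 0.
Proof.
rewrite /Psi negb_or => /andP [/orP hP /andP [hG hR]].
have {hP} hP : inGamma (St d phi t.+1) phi 0.
  by case: hP => // h; rewrite h in hR.
move: hP; rewrite /= -/(St d phi t) /step.
case e: (d _) => [v|]; last by move=> h; rewrite h in hG.
move=> /existsP [u /andP [hu hr]].
move: hu; rewrite in_setU1 => /orP [/eqP eu|hu]; last first.
  by move: hG; rewrite /inGamma => /existsP; case; exists u; rewrite hu hr.
subst u.
have hvS : v \notin St d phi t.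
  apply/negP => hv; move/negP: hG; apply; apply/existsP; exists v; by rewrite hv hr.
have hvi : (v <= i)%N.
  rewrite leqNgt; apply/negP => hiv.
  have hin : (i.+1 < n)%N by apply: leq_ltn_trans hiv (ltn_ord v).
  have [_ h1] := reach_split (leq0n i.+1) hiv hr.
  by move: hR; rewrite hin h1.
exists v => //; rewrite hr andbT /Gev /= -/(St d phi t) /step e in_setU1 eqxx hvS /=.
apply/forallP => u; apply/implyP => hu.
have hnu : ~~ reach phi u 0.
  apply/negP => h; move/negP: hG; apply; apply/existsP; exists u; by rewrite hu h.
rewrite ltnNge; apply/andP; split.
  apply/negP => huv; have [_ h1] := reach_split (leq0n u) huv hr.
  by rewrite h1 in hnu.
apply/negP => h; by rewrite (reach_trans h hr) in hnu.
Qed.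

Lemma det_bound (R : realType) n (q : 'I_n.-1 -> R) (hq : forall j, 0 <= q j <= 1)
  (d : det_policy n) (i : 'I_n) t :
  Pr q (Psi i d t) <= \sum_(j : 'I_n | (j <= i)%N) preach q j * Pr q (fun phi => j \in St d phi t)
                      + preach q i.+1.
Proof.
elim: t => [|t IH].
  apply: ler_wpDl; first by apply: sumr_ge0 => j _; apply: mulr_ge0; [exact: preach_ge0|exact: Pr_ge0].
  have hG : forall phi : realization n, inGamma (St d phi 0) phi 0 = false.
    by move=> phi; rewrite /inGamma; apply/negbTE; apply/negP; case/existsP => u; rewrite /St /= finset.in_set0.
  case hi: (i.+1 < n)%N.
    have -> : Pr q (Psi i d 0) = Pr q (fun phi => predT phi && reach phi i.+1 0).
      by apply: eq_bigl => phi; rewrite /Psi hG hi.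
    rewrite (@Pr_reach _ _ _ i.+1) // ?Pr_true ?mulr1 /preach ?hi //.
  have -> : Pr q (Psi i d 0) = 0.
    by rewrite /Pr big_pred0 // => phi; rewrite /Psi hG hi.
  by rewrite /preach hi.
rewrite (Pr_split q (Psi i d t.+1) (Psi i d t)).
have hsub : forall phi, St d phi t \subset St d phi t.+1 by move=> phi; exact: step_sub.
have h1 : Pr q (fun phi => Psi i d t.+1 phi && Psi i d t phi) <= Pr q (Psi i d t).
  by apply: Pr_le => // phi /andP[].
have h2 : Pr q (fun phi => Psi i d t.+1 phi && ~~ Psi i d t phi) <=
    \sum_(j : 'I_n | (j <= i)%N) preach q j *
        Pr q (fun phi => (j \in St d phi t.+1) && (j \notin St d phi t)).
  apply: le_trans (@Pr_union R n q hq 'I_n (fun j : 'I_n => (j <= i)%N)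
     (fun phi => Psi i d t.+1 phi && ~~ Psi i d t phi)
     (fun j phi => Gev d t j phi && reach phi j 0) (@Gev_cover n d i t)) _.
  apply: ler_sum => j _.
  rewrite (@Pr_reach _ _ _ j) //; last by move=> phi phi' h; exact: Gev_agree.
  rewrite /preach ltn_ord; apply: ler_wpM2l.
    by apply: prodr_ge0 => k _; case/andP: (hq k).
  by apply: Pr_le => // phi /and3P [a b _]; rewrite a b.
have h3 : forall j : 'I_n, Pr q (fun phi => j \in St d phi t.+1) =
    Pr q (fun phi => j \in St d phi t) + Pr q (fun phi => (j \in St d phi t.+1) && (j \notin St d phi t)).
  move=> j; rewrite (Pr_split q _ (fun phi => j \in St d phi t)); congr (_ + _).
  apply: eq_bigl => phi; apply/idP/idP; first by case/andP.
  by move=> h; rewrite h (fintype.subsetP (hsub phi) _ h).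
under [X in _ <= X + _]eq_bigr do rewrite h3 mulrDr.
rewrite big_split /= addrAC.
apply: lerD; first exact: le_trans h1 IH.
exact: h2.
Qed.
Unset Implicit Arguments. Set Strict Implicit.

Lemma seeds_bound (R : realType) n (q : 'I_n.-1 -> R) (hq : forall j, 0 <= q j <= 1)
  (d : det_policy n) (i : 'I_n) :
  Pr q (fun phi => inGamma (seeds d phi) phi 0) <=
  \sum_(j : 'I_n | (j <= i)%N) preach q j * Pr q (fun phi => j \in seeds d phi) + preach q i.+1.
Proof.
apply: le_trans (det_bound hq d i n).
by apply: Pr_le => // phi h; rewrite /Psi /St -/(seeds d phi) h.
Qed.

Theorem lemma6 (R : realType) (n : nat) (q : 'I_n.-1 -> R)
  (hq : forall j, 0 <= q j <= 1) (x : 'I_n -> R) (hx : forall i, 0 <= x i <= 1)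
  (i : 'I_n) :
  fplus q 0 x <= \sum_(j : 'I_n | (j <= i)%N) x j * preach q j + preach q i.+1.
Proof.
rewrite /fplus.
set E := (fun s : R => _).
have hge : 0 <= \sum_(j : 'I_n | (j <= i)%N) x j * preach q j + preach q i.+1.
  apply: addr_ge0; last exact: preach_ge0.
  apply: sumr_ge0 => j _; apply: mulr_ge0; [by case/andP: (hx j)|exact: preach_ge0].
case: (pselect (exists s, E s)) => hE; last first.
  have -> : E = set0.
    by apply/seteqP; split => s hs //; exfalso; apply: hE; exists s.
  by rewrite sup0.
apply: ge_sup => // s [pi [[hw hsum] hsel ->]].
rewrite /sigma.
apply: le_trans (_ : _ <= \sum_k pol_w pi k *
   (\sum_(j : 'I_n | (j <= i)%N) preach q j * Pr q (fun phi => j \in seeds (pol_d pi k) phi)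
     + preach q i.+1)) _.
  apply: ler_sum => k _; apply: ler_wpM2l; first exact: hw.
  exact: seeds_bound.
rewrite le_eqVlt; apply/orP; left; apply/eqP.
under eq_bigr do rewrite mulrDr.
rewrite big_split /= -[X in _ + X]mulr_suml hsum mul1r; congr (_ + _).
under eq_bigr do rewrite mulr_sumr.
rewrite exchange_big /=; apply: eq_bigr => j _.
rewrite -hsel /sel_prob [in RHS]mulr_suml; apply: eq_bigr => k _.
by rewrite mulrCA [RHS]mulrC.
Qed.
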